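(* Let $f:\mathbb{R}^n_{>0}\to\mathbb{R}^n_{>0}$ be order-preserving and homogeneous. If $r(f^J_0)>\lambda(f^{[n]\setminus J}_\infty)$ for some nonempty proper subset $J\subset[n]$, then $f$ has no eigenvectors in $\mathbb{R}^n_{>0}$.
   Context: $[n]=\{1,\dots,n\}$; entrywise order. Order-preserving: $x\le y\Rightarrow f(x)\le f(y)$; homogeneous: $f(tx)=tf(x)$ for $t>0$. Such $f$ extends continuously to order-preserving homogeneous maps $\mathbb{R}^n_{\ge0}\to\mathbb{R}^n_{\ge0}$ and $(0,\infty]^n\to(0,\infty]^n$, again denoted $f$. For $\alpha\in[-\infty,\infty]$, $J\subseteq[n]$: $P^J_\alpha(x)_j=x_j$ for $j\in J$, $=\alpha$ otherwise; $f^J_0=P^J_0fP^J_0$, $f^J_\infty=P^J_\infty fP^J_\infty$. For $g$ order-preserving homogeneous on $\mathbb{R}^n_{\ge0}$ or $(0,\infty]^n$: $r(g)=\inf_{x\in\mathbb{R}^n_{>0}}\max_i g(x)_i/x_i$, $\lambda(g)=\sup_{x\in\mathbb{R}^n_{>0}}\min_i g(x)_i/x_i$ (values in $[0,\infty]$). *)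

(* Defs.v *)
From HB Require Import structures.
From mathcomp Require Import all_boot all_order all_algebra.
From mathcomp Require Import all_classical all_reals all_analysis.
Set Implicit Arguments. Unset Strict Implicit. Unset Printing Implicit Defensive.
Import Order.TTheory GRing.Theory Num.Theory.
Local Open Scope classical_set_scope.
Local Open Scope ring_scope.

Section Defs.
Variables (R : realType) (n : nat).

Definition posv (x : 'I_n -> R) : Prop := forall i, 0 < x i.

Definition maps_pos (f : ('I_n -> R) -> ('I_n -> R)) : Prop :=
  forall x, posv x -> posv (f x).

Definition order_preserving (f : ('I_n -> R) -> ('I_n -> R)) : Prop :=
  forall x y, posv x -> posv y -> (forall i, x i <= y i) ->
  forall i, f x i <= f y i.

Definition homogeneous (f : ('I_n -> R) -> ('I_n -> R)) : Prop :=
  forall (t : R) x, 0 < t -> posv x ->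
  f (fun j => t * x j) = (fun j => t * f x j).

(* continuous extension to R^n_{>=0}: f(x) = lim_{e -> 0+} f(x + e 1)
   = inf_{e > 0} f(x + e 1) (monotone limit) *)
Definition ext0 (f : ('I_n -> R) -> ('I_n -> R)) (x : 'I_n -> R) : 'I_n -> R :=
  fun i => inf [set f (fun j => x j + e) i | e in [set e : R | 0 < e]].

(* continuous extension to (0,oo]^n: f(x) = lim_{t -> oo} f(min(x, t 1))
   = sup_{t > 0} f(min(x, t 1)) (monotone limit), with values in (0,oo] *)
Definition extInf (f : ('I_n -> R) -> ('I_n -> R)) (x : 'I_n -> \bar R)
  : 'I_n -> \bar R :=
  fun i => ereal_sup [set (f (fun j => fine (mine (x j) t%:E)) i)%:E
                     | t in [set t : R | 0 < t]].

Definition P0 (J : {set 'I_n}) (x : 'I_n -> R) : 'I_n -> R :=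
  fun i => if i \in J then x i else 0.
Definition PInf (J : {set 'I_n}) (x : 'I_n -> \bar R) : 'I_n -> \bar R :=
  fun i => if i \in J then x i else +oo%E.

Definition f0 (f : ('I_n -> R) -> ('I_n -> R)) (J : {set 'I_n}) (x : 'I_n -> R)
  : 'I_n -> R := P0 J (ext0 f (P0 J x)).

Definition fInf (f : ('I_n -> R) -> ('I_n -> R)) (J : {set 'I_n})
  (x : 'I_n -> \bar R) : 'I_n -> \bar R := PInf J (extInf f (PInf J x)).

Definition r_nonneg (g : ('I_n -> R) -> ('I_n -> R)) : \bar R :=
  ereal_inf [set (\big[maxe/-oo%E]_i (g x i / x i)%:E)%E | x in posv].

Definition lambda_inf (g : ('I_n -> \bar R) -> ('I_n -> \bar R)) : \bar R :=
  ereal_sup [set (\big[mine/+oo%E]_i (g (fun j => (x j)%:E) i * ((x i)^-1)%:E))%E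
            | x in posv].

End Defs.

(* Main.v *)
Require Import Defs.
From HB Require Import structures.
From mathcomp Require Import all_boot all_order all_algebra.
From mathcomp Require Import all_classical all_reals all_analysis.
Import Order.TTheory GRing.Theory Num.Theory.
Local Open Scope classical_set_scope.
Local Open Scope ring_scope.

Theorem theorem3p6 (R : realType) (n : nat)
  (f : ('I_n -> R) -> ('I_n -> R)) (J : {set 'I_n}) :
  maps_pos f -> order_preserving f -> homogeneous f ->
  J != finset.set0 -> J != finset.setT ->
  (lambda_inf (fInf f (~: J)) < r_nonneg (f0 f J))%E ->
  ~ (exists (v : 'I_n -> R) (mu : R), posv v /\ forall i, f v i = mu * v i).
Proof.
move=> fpos fop fhom _ _ Hlt [v [mu [vpos Hv]]].
have mup : forall i : 'I_n, 0 < mu.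
  move=> i; have := fpos v vpos i; rewrite Hv => h.
  by rewrite -(pmulr_lgt0 _ (vpos i)).
have Hr : (r_nonneg (f0 f J) <= mu%:E)%E.
  apply: ge_ereal_inf; exists (\big[maxe/-oo%E]_i (f0 f J v i / v i)%:E)%E.
    by exists v.
  apply: (big_ind (fun y => y <= mu%:E)%E) => //.
  - by rewrite leNye.
  - by move=> x y hx hy; rewrite ge_max hx hy.
  move=> i _; rewrite lee_fin /f0 /P0.
  case: ifP => iJ; last by rewrite mul0r ltW // (mup i).
  rewrite ler_pdivrMr //.
  set s := \sum_j (v j)^-1.
  have hs : forall j, (v j)^-1 <= s.
    move=> j; rewrite /s (bigD1 j) //= ler_wpDr // sumr_ge0 // => k _.
    by rewrite invr_ge0 ltW.
  have s0 : 0 < s by apply: lt_le_trans (hs i); rewrite invr_gt0.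
  have m0 : 0 < mu * v i by rewrite mulr_gt0 // (mup i).
  apply/ler_addgt0Pr => eps eps0.
  set e := eps / (s * (mu * v i)).
  have e0 : 0 < e by rewrite divr_gt0 // mulr_gt0.
  have hP : posv (fun j => P0 J v j + e).
    move=> j; rewrite /P0; case: ifP => _; last by rewrite add0r.
    by rewrite addr_gt0.
  have hlb : has_lbound [set f (fun j => P0 J v j + e0) i | e0 in [set e0 : R | 0 < e0]].
    exists 0 => y [e' e'0 <-]; apply: ltW; apply: fpos => j.
    rewrite /P0; case: ifP => _; last by rewrite add0r.
    by rewrite addr_gt0.
  have c0 : 0 < 1 + e * s by rewrite addr_gt0 // mulr_gt0.
  apply: (@le_trans _ _ (f (fun j => P0 J v j + e) i)).
    apply: (ge_inf hlb); by exists e.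
  apply: (@le_trans _ _ (f (fun j => (1 + e * s) * v j) i)).
    apply: fop => //.
      by move=> j; rewrite mulr_gt0.
    move=> j; rewrite mulrDl mul1r /P0; case: ifP => _.
      rewrite lerD2l -mulrA -[leLHS]mulr1 ler_pM2l //.
      by rewrite -ler_pdivrMr // div1r hs.
    rewrite add0r; apply: ler_wpDl; first exact: ltW.
    rewrite -mulrA -[leLHS]mulr1 ler_pM2l //.
    by rewrite -ler_pdivrMr // div1r hs.
  rewrite fhom // Hv mulrDl mul1r lerD2l /e.
  by rewrite -(mulrA _ s (mu * v i)) mulfVK ?gt_eqF // mulr_gt0.
have Hl : (mu%:E <= lambda_inf (fInf f (~: J)))%E.
  apply: le_ereal_sup_tmp.
  exists (\big[mine/+oo%E]_i (fInf f (~: J) (fun j => (v j)%:E) i * ((v i)^-1)%:E))%E.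
    by exists v.
  apply: (big_ind (fun y => mu%:E <= y)%E) => //.
  - by rewrite leey.
  - by move=> x y hx hy; rewrite le_min hx hy.
  move=> i _; rewrite /fInf /PInf.
  case: ifP => iJ; last by rewrite gt0_mulye ?leey // lte_fin invr_gt0.
  set t := \sum_j v j.
  have ht : forall j, v j <= t.
    move=> j; rewrite /t (bigD1 j) //= ler_wpDr // sumr_ge0 // => k _.
    by rewrite ltW.
  set y := fun j => fine (mine (if j \in ~: J then (v j)%:E else +oo%E) t%:E).
  have hy : forall j, v j <= y j.
    move=> j; rewrite /y; case: ifP => _.
      by rewrite -EFin_min /= le_min lexx ht.
    by rewrite min_r ?leey //= ht.
  have ypos : posv y by move=> j; apply: lt_le_trans (hy j).
  have : ((mu * v i)%:E <= extInf f (fun j => if j \in ~: J then (v j)%:E else +oo%E) i)%E.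
    apply: le_ereal_sup_tmp; exists (f y i)%:E; first by exists t => //; apply: lt_le_trans (ht i).
    by rewrite lee_fin -Hv; apply: fop.
  move=> /(lee_wpmul2r (x := ((v i)^-1)%:E)); rewrite lee_fin invr_ge0 ltW // => /(_ isT).
  by rewrite -EFinM mulfK ?gt_eqF.
have := lt_le_trans Hlt (le_trans Hr Hl).
by rewrite ltxx.
Qed.
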